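(* In the 3-body problem in ${\bf S}^2$ with equal masses $m_1=m_2=m_3=m$, for every $m>0$ and every $z\in(-1/2,0)\cup(0,1)$ there exist $\omega>0$ and $\omega<0$ such that ${\bf q}_1(t)=(0,0,1)$, ${\bf q}_2(t)=(r\cos\omega t, r\sin\omega t, z)$, ${\bf q}_3(t)=(-r\cos\omega t,-r\sin\omega t,z)$, with $r=(1-z^2)^{1/2}$, is a solution of the equations of motion (an elliptic relative equilibrium); the condition on $\omega$ is $\frac{4z+|z|^{-1}}{4z^2(1-z^2)^{3/2}}=\frac{\omega^2}{m}$.
   Context: The $n$-body problem in ${\bf S}^2$: bodies of masses $m_1,\dots,m_n>0$ have positions ${\bf q}_i=(x_i,y_i,z_i)\in\mathbb R^3$ on the unit sphere ${\bf S}^2=\{{\bf q}:{\bf q}\cdot{\bf q}=1\}$ ($\cdot$ the Euclidean inner product), and satisfy $$\ddot{\bf q}_i=\sum_{j\ne i}\frac{m_j[{\bf q}_j-({\bf q}_i\cdot{\bf q}_j){\bf q}_i]}{[1-({\bf q}_i\cdot{\bf q}_j)^2]^{3/2}}-(\dot{\bf q}_i\cdot\dot{\bf q}_i){\bf q}_i,\qquad {\bf q}_i\cdot{\bf q}_i=1,\ \ {\bf q}_i\cdot\dot{\bf q}_i=0,$$ $i=1,\dots,n$, defined only for configurations with $({\bf q}_i\cdot{\bf q}_j)^2\ne 1$ for all $i\ne j$. *)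

(* Defs.v *)
From Stdlib Require Import Reals Lra.
Open Scope R_scope.

Definition vec3 : Type := (R * R * R)%type.
Definition mk3 (a b c : R) : vec3 := (a, b, c).
Definition vx (u : vec3) : R := fst (fst u).
Definition vy (u : vec3) : R := snd (fst u).
Definition vz (u : vec3) : R := snd u.
Definition dot (u w : vec3) : R := vx u * vx w + vy u * vy w + vz u * vz w.
Definition vadd (u w : vec3) : vec3 := mk3 (vx u + vx w) (vy u + vy w) (vz u + vz w).
Definition vscale (c : R) (u : vec3) : vec3 := mk3 (c * vx u) (c * vy u) (c * vz u).
Definition vsub (u w : vec3) : vec3 := vadd u (vscale (-1) w).
Definition vzero : vec3 := mk3 0 0 0.

Fixpoint vsum (k : nat) (f : nat -> vec3) : vec3 :=
  match k with
  | O => vzero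
  | S k' => vadd (vsum k' f) (f k')
  end.

Definition has_deriv3 (f g : R -> vec3) : Prop :=
  forall t : R,
    derivable_pt_lim (fun s => vx (f s)) t (vx (g t)) /\
    derivable_pt_lim (fun s => vy (f s)) t (vy (g t)) /\
    derivable_pt_lim (fun s => vz (f s)) t (vz (g t)).

(* Right-hand side of the equations of motion of the n-body problem in S^2,
   bodies indexed 0..n-1, masses m, positions qs and velocities vs at a time. *)
Definition accel (n : nat) (m : nat -> R) (qs vs : nat -> vec3) (i : nat) : vec3 :=
  vadd
    (vsum n (fun j =>
       if Nat.eq_dec j i then vzero
       else vscale (m j / Rpower (1 - (dot (qs i) (qs j)) ^ 2) (3 / 2))
                   (vsub (qs j) (vscale (dot (qs i) (qs j)) (qs i)))))
    (vscale (- dot (vs i) (vs i)) (qs i)).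

Definition curved_nbody_solution (n : nat) (m : nat -> R) (q : nat -> R -> vec3) : Prop :=
  exists v a : nat -> R -> vec3,
    forall i : nat, (i < n)%nat ->
      has_deriv3 (q i) (v i) /\
      has_deriv3 (v i) (a i) /\
      forall t : R,
        dot (q i t) (q i t) = 1 /\
        dot (q i t) (v i t) = 0 /\
        (forall j : nat, (j < n)%nat -> j <> i -> (dot (q i t) (q j t)) ^ 2 <> 1) /\
        a i t = accel n m (fun j => q j t) (fun j => v j t) i.

(* The three-body configuration of the theorem (bodies 1,2,3 are indices 0,1,2) *)
Definition ere_config (z omega : R) (i : nat) (t : R) : vec3 :=
  let r := sqrt (1 - z ^ 2) in
  match i with
  | O => mk3 0 0 1
  | S O => mk3 (r * cos (omega * t)) (r * sin (omega * t)) z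
  | _ => mk3 (- (r * cos (omega * t))) (- (r * sin (omega * t))) z
  end.

(* Main.v *)
Require Import Defs.
From Stdlib Require Import Reals Lra Lia Psatz.
Open Scope R_scope.

Lemma lin w t : derivable_pt_lim (fun s => w * s) t w.
Proof. pose proof (derivable_pt_lim_scal id w t 1 (derivable_pt_lim_id t)) as H.
  rewrite Rmult_1_r in H. exact H. Qed.

Lemma Lc k w t : derivable_pt_lim (fun s => k * cos (w * s)) t (-(k*w) * sin (w*t)).
Proof.
  replace (-(k*w) * sin (w*t)) with (k * ((- sin (w*t)) * w)) by ring.
  apply derivable_pt_lim_scal.
  apply (derivable_pt_lim_comp (fun s => w * s) cos).
  - apply lin.
  - apply derivable_pt_lim_cos.
Qed.
Lemma Ls k w t : derivable_pt_lim (fun s => k * sin (w * s)) t ((k*w) * cos (w*t)).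
Proof.
  replace ((k*w) * cos (w*t)) with (k * (cos (w*t) * w)) by ring.
  apply derivable_pt_lim_scal.
  apply (derivable_pt_lim_comp (fun s => w * s) sin).
  - apply lin.
  - apply derivable_pt_lim_sin.
Qed.
Lemma Lnc k w t : derivable_pt_lim (fun s => - (k * cos (w * s))) t ((k*w) * sin (w*t)).
Proof.
  replace ((k*w) * sin (w*t)) with (- (-(k*w) * sin (w*t))) by ring.
  apply (derivable_pt_lim_opp (fun s => k * cos (w * s))). apply Lc.
Qed.
Lemma Lns k w t : derivable_pt_lim (fun s => - (k * sin (w * s))) t (-(k*w) * cos (w*t)).
Proof.
  replace (-(k*w) * cos (w*t)) with (- ((k*w) * cos (w*t))) by ring.
  apply (derivable_pt_lim_opp (fun s => k * sin (w * s))). apply Ls.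
Qed.
Lemma Lk k t : derivable_pt_lim (fun _ => k) t 0.
Proof. apply derivable_pt_lim_const. Qed.

Lemma Rpower32 x : 0 < x -> Rpower x (3/2) = x * sqrt x.
Proof.
  intro H. replace (3/2) with (1 + /2) by field.
  rewrite Rpower_plus, Rpower_1, Rpower_sqrt; auto.
Qed.


Lemma cs1 x : sin x * sin x + cos x * cos x = 1.
Proof. pose proof (sin2_cos2 x) as H. unfold Rsqr in H. exact H. Qed.

Lemma Vdot1 a x : dot (mk3 (-(a) * sin x) (a * cos x) 0) (mk3 (-(a) * sin x) (a * cos x) 0) = a * a.
Proof. unfold dot, vx, vy, vz, mk3; cbn [fst snd].
  replace (- a * sin x * (- a * sin x) + a * cos x * (a * cos x) + 0 * 0) with (a*a*(sin x * sin x + cos x * cos x)) by ring.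
  rewrite cs1; ring. Qed.
Lemma Vdot2 a x : dot (mk3 (a * sin x) (-(a) * cos x) 0) (mk3 (a * sin x) (-(a) * cos x) 0) = a * a.
Proof. unfold dot, vx, vy, vz, mk3; cbn [fst snd].
  replace (a * sin x * (a * sin x) + - a * cos x * (- a * cos x) + 0 * 0) with (a*a*(sin x * sin x + cos x * cos x)) by ring.
  rewrite cs1; ring. Qed.
Lemma Vdot0 : dot (mk3 0 0 0) (mk3 0 0 0) = 0.
Proof. unfold dot, vx, vy, vz, mk3; cbn [fst snd]. ring. Qed.

Section S.
Variables z w t : R.
Hypothesis Hr : sqrt (1 - z^2) * sqrt (1 - z^2) = 1 - z^2.
Lemma D00 : dot (ere_config z w 0 t) (ere_config z w 0 t) = 1.
Proof. unfold dot, ere_config, vx, vy, vz, mk3; cbn [fst snd]. ring. Qed.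
Lemma D01 : dot (ere_config z w 0 t) (ere_config z w 1 t) = z.
Proof. unfold dot, ere_config, vx, vy, vz, mk3; cbn [fst snd]. ring. Qed.
Lemma D02 : dot (ere_config z w 0 t) (ere_config z w 2 t) = z.
Proof. unfold dot, ere_config, vx, vy, vz, mk3; cbn [fst snd]. ring. Qed.
Lemma D10 : dot (ere_config z w 1 t) (ere_config z w 0 t) = z.
Proof. unfold dot, ere_config, vx, vy, vz, mk3; cbn [fst snd]. ring. Qed.
Lemma D20 : dot (ere_config z w 2 t) (ere_config z w 0 t) = z.
Proof. unfold dot, ere_config, vx, vy, vz, mk3; cbn [fst snd]. ring. Qed.
Lemma D11 : dot (ere_config z w 1 t) (ere_config z w 1 t) = 1.
Proof. unfold dot, ere_config, vx, vy, vz, mk3; cbn [fst snd].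
  set (r := sqrt (1 - z^2)) in *.
  transitivity (r * r * (sin (w*t) * sin (w*t) + cos (w*t) * cos (w*t)) + z*z); [ring|].
  rewrite cs1, Hr. ring. Qed.
Lemma D22 : dot (ere_config z w 2 t) (ere_config z w 2 t) = 1.
Proof. unfold dot, ere_config, vx, vy, vz, mk3; cbn [fst snd].
  set (r := sqrt (1 - z^2)) in *.
  transitivity (r * r * (sin (w*t) * sin (w*t) + cos (w*t) * cos (w*t)) + z*z); [ring|].
  rewrite cs1, Hr. ring. Qed.
Lemma D12 : dot (ere_config z w 1 t) (ere_config z w 2 t) = 2*z*z - 1.
Proof. unfold dot, ere_config, vx, vy, vz, mk3; cbn [fst snd].
  set (r := sqrt (1 - z^2)) in *.
  transitivity (- (r * r) * (sin (w*t) * sin (w*t) + cos (w*t) * cos (w*t)) + z*z); [ring|].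
  rewrite cs1, Hr. ring. Qed.
Lemma D21 : dot (ere_config z w 2 t) (ere_config z w 1 t) = 2*z*z - 1.
Proof. unfold dot, ere_config, vx, vy, vz, mk3; cbn [fst snd].
  set (r := sqrt (1 - z^2)) in *.
  transitivity (- (r * r) * (sin (w*t) * sin (w*t) + cos (w*t) * cos (w*t)) + z*z); [ring|].
  rewrite cs1, Hr. ring. Qed.
End S.

Lemma P1 z : z^2 < 1 -> Rpower (1 - z * (z * 1)) (3/2) = (1 - z*z) * sqrt (1 - z^2).
Proof. intro H. replace (1 - z * (z*1)) with (1 - z^2) by ring.
  rewrite Rpower32 by lra. ring. Qed.

Lemma P2 z : z <> 0 -> z^2 < 1 -> Rpower (1 - (2*z*z - 1) * ((2*z*z - 1) * 1)) (3/2)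
   = 8 * (z * z * Rabs z) * ((1 - z*z) * sqrt (1 - z^2)).
Proof. intros H0 H.
  assert (Hr : 0 <= sqrt (1 - z^2)) by apply sqrt_pos.
  assert (Hr2 : sqrt (1 - z^2) * sqrt (1 - z^2) = 1 - z^2) by (apply sqrt_sqrt; lra).
  assert (Ha : Rabs z * Rabs z = z * z) by (rewrite <- Rabs_mult; apply Rabs_pos_eq; nra).
  assert (Ha0 : 0 <= Rabs z) by apply Rabs_pos.
  replace (1 - (2*z*z - 1) * ((2*z*z - 1) * 1)) with ((2 * Rabs z * sqrt (1 - z^2))^2).
  2:{ replace ((2 * Rabs z * sqrt (1 - z^2))^2) with (4 * (Rabs z * Rabs z) * (sqrt (1 - z^2) * sqrt (1 - z^2))) by ring.
      rewrite Ha, Hr2. ring. }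
  assert (Hp : 0 < Rabs z) by (apply Rabs_pos_lt; auto).
  assert (Hq : 0 < sqrt (1 - z^2)) by (apply sqrt_lt_R0; lra).
  rewrite Rpower32 by (apply pow_lt; nra).
  rewrite sqrt_pow2 by nra.
  replace ((2 * Rabs z * sqrt (1 - z ^ 2)) ^ 2 * (2 * Rabs z * sqrt (1 - z ^ 2)))
    with (8 * ((Rabs z * Rabs z) * Rabs z) * ((sqrt (1 - z^2) * sqrt (1 - z^2)) * sqrt (1 - z^2))) by ring.
  rewrite Ha, Hr2. ring. Qed.

Lemma sol m z w : 0 < m -> z <> 0 -> z^2 < 1 ->
  w^2 * (4 * z^2 * ((1 - z^2) * sqrt (1 - z^2))) = m * (4*z + / Rabs z) ->
  curved_nbody_solution 3 (fun _ => m) (ere_config z w).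
Proof.
  intros Hm Hz Hz1 Hw.
  assert (Hr : sqrt (1 - z^2) * sqrt (1 - z^2) = 1 - z^2) by (apply sqrt_sqrt; lra).
  assert (Hq : 0 < sqrt (1 - z^2)) by (apply sqrt_lt_R0; lra).
  assert (Hp : 0 < Rabs z) by (apply Rabs_pos_lt; auto).
  assert (Ha : Rabs z * Rabs z = z * z) by (rewrite <- Rabs_mult; apply Rabs_pos_eq; nra).
  exists (fun i t => match i with
     | O => mk3 0 0 0
     | S O => mk3 (-(sqrt (1 - z^2)*w) * sin (w*t)) ((sqrt (1 - z^2)*w) * cos (w*t)) 0
     | _ => mk3 ((sqrt (1 - z^2)*w) * sin (w*t)) (-(sqrt (1 - z^2)*w) * cos (w*t)) 0 end).
  exists (fun i t => match i with
     | O => mk3 0 0 0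
     | S O => mk3 (-(sqrt (1 - z^2)*w)*w * cos (w*t)) (-(sqrt (1 - z^2)*w*w) * sin (w*t)) 0
     | _ => mk3 ((sqrt (1 - z^2)*w)*w * cos (w*t)) ((-(-(sqrt (1 - z^2)*w)*w)) * sin (w*t)) 0 end).
  set (r := sqrt (1 - z^2)) in *.
  set (a := Rabs z) in *.
  assert (HA1 : (1 - z*z) * r <> 0) by (apply Rmult_integral_contrapositive; split; nra).
  assert (Hw' : w * w * 4 * z * z * ((1 - z*z) * r) = m * (4*z + / a)) by (rewrite <- Hw; ring).
  assert (Hr' : r * r = 1 - z * z) by (rewrite Hr; ring).
  assert (K1 : m / ((1 - z*z) * r) * z + m / (8 * (z * z * a) * ((1 - z*z) * r)) * (2*z*z)
               + (r*w)*(r*w) = w*w).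
  { assert (E : m / ((1 - z*z) * r) * z + m / (8 * (z * z * a) * ((1 - z*z) * r)) * (2*z*z)
                = m * (4*z + / a) / (4 * ((1 - z*z) * r))).
    { field. repeat split; nra. }
    rewrite E, <- Hw'. replace (r*w*(r*w)) with (r*r*(w*w)) by ring. rewrite Hr'. field. nra. }
  assert (K2 : m / ((1 - z*z) * r) * (1 + -1 * (z*z)) + m / (8 * (z * z * a) * ((1 - z*z) * r)) * (z + -1 * ((2*z*z - 1) * z))
               + -((r*w)*(r*w)) * z = 0).
  { assert (E : m / ((1 - z*z) * r) * (1 + -1 * (z*z)) + m / (8 * (z * z * a) * ((1 - z*z) * r)) * (z + -1 * ((2*z*z - 1) * z))
                = m * (4*z + / a) / (4 * z * r)).
    { field. repeat split; nra. }
    rewrite E, <- Hw'. replace (r*w*(r*w)) with (r*r*(w*w)) by ring. rewrite Hr'. field. nra. }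
  intros i Hi.
  destruct i as [|[|[|i]]]; [ | | | lia].
  - split; [|split].
    + intro t; cbn; repeat split; apply Lk.
    + intro t; cbn; repeat split; apply Lk.
    + intro t. cbn -[ere_config dot Rpower].
      split; [|split; [|split]].
      * apply D00.
      * unfold dot, vx, vy, vz, mk3; cbn [fst snd]; ring.
      * intros j Hj Hj0. destruct j as [|[|[|j]]]; [lia| | |lia].
        -- rewrite D01. nra.
        -- rewrite D02. nra.
      * unfold accel. cbn -[ere_config dot Rpower].
        rewrite D01, D02, Vdot0 by exact Hr.
        rewrite P1 by exact Hz1. fold r.
        cbv [ere_config vadd vscale vsub vzero vx vy vz mk3 fst snd]. fold r.
        f_equal; [f_equal|]; ring.
  - split; [|split].
    + intro t; cbn; repeat split; [apply Lc|apply Ls|apply Lk].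
    + intro t; cbn; repeat split; [apply Ls|apply Lc|apply Lk].
    + intro t. cbn -[ere_config dot Rpower].
      split; [|split; [|split]].
      * apply D11; exact Hr.
      * cbv [ere_config dot vx vy vz mk3 fst snd]. fold r. ring.
      * intros j Hj Hj0. destruct j as [|[|[|j]]]; [| lia | |lia].
        -- rewrite D10. nra.
        -- rewrite D12 by exact Hr. assert (0 < z*z) by nra. nra.
      * unfold accel. cbn -[ere_config dot Rpower].
        rewrite D10, D12, Vdot1 by exact Hr.
        rewrite P1 by exact Hz1. rewrite P2 by assumption. fold r a.
        cbv [ere_config vadd vscale vsub vzero vx vy vz mk3 fst snd]. fold r.
        f_equal; [f_equal|].
        -- transitivity ((r * cos (w*t)) * -(w*w)); [ring | rewrite <- K1; ring].
        -- transitivity ((r * sin (w*t)) * -(w*w)); [ring | rewrite <- K1; ring].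
        -- etransitivity; [symmetry; exact K2|]; ring.
  - split; [|split].
    + intro t; cbn; repeat split; [apply Lnc|apply Lns|apply Lk].
    + intro t; cbn; repeat split; [apply Ls|apply Lc|apply Lk].
    + intro t. cbn -[ere_config dot Rpower].
      split; [|split; [|split]].
      * apply D22; exact Hr.
      * cbv [ere_config dot vx vy vz mk3 fst snd]. fold r. ring.
      * intros j Hj Hj0. destruct j as [|[|[|j]]]; [| | lia |lia].
        -- rewrite D20. nra.
        -- rewrite D21 by exact Hr. assert (0 < z*z) by nra. nra.
      * unfold accel. cbn -[ere_config dot Rpower].
        rewrite D20, D21, Vdot2 by exact Hr.
        rewrite P1 by exact Hz1. rewrite P2 by assumption. fold r a.
        cbv [ere_config vadd vscale vsub vzero vx vy vz mk3 fst snd]. fold r.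
        f_equal; [f_equal|].
        -- transitivity (-(r * cos (w*t)) * -(w*w)); [ring | rewrite <- K1; ring].
        -- transitivity (-(r * sin (w*t)) * -(w*w)); [ring | rewrite <- K1; ring].
        -- etransitivity; [symmetry; exact K2|]; ring.
Qed.

Theorem mainTheorem11 :
  forall (m z : R), 0 < m ->
    ((-1/2 < z /\ z < 0) \/ (0 < z /\ z < 1)) ->
    (exists omega : R, 0 < omega /\
       (4 * z + / Rabs z) / (4 * z ^ 2 * Rpower (1 - z ^ 2) (3 / 2)) = omega ^ 2 / m /\
       curved_nbody_solution 3 (fun _ => m) (ere_config z omega)) /\
    (exists omega : R, omega < 0 /\
       (4 * z + / Rabs z) / (4 * z ^ 2 * Rpower (1 - z ^ 2) (3 / 2)) = omega ^ 2 / m /\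
       curved_nbody_solution 3 (fun _ => m) (ere_config z omega)).
Proof.
  intros m z Hm Hzc.
  assert (Hz : z <> 0) by lra.
  assert (Hz1 : z^2 < 1) by (destruct Hzc; nra).
  assert (HN : 0 < 4 * z + / Rabs z).
  { destruct Hzc as [[H1 H2]|[H1 H2]].
    - rewrite Rabs_left by lra.
      assert (/ (1/2) < / (- z)) by (apply Rinv_lt_contravar; nra).
      replace (/ (1/2)) with 2 in H by field. lra.
    - rewrite Rabs_pos_eq by lra. assert (0 < / z) by (apply Rinv_0_lt_compat; lra). lra. }
  assert (Hq : 0 < sqrt (1 - z^2)) by (apply sqrt_lt_R0; lra).
  rewrite Rpower32 by lra.
  assert (HD : 0 < 4 * z ^ 2 * ((1 - z ^ 2) * sqrt (1 - z ^ 2))).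
  { apply Rmult_lt_0_compat; [nra|]. apply Rmult_lt_0_compat; lra. }
  set (D := 4 * z ^ 2 * ((1 - z ^ 2) * sqrt (1 - z ^ 2))) in *.
  set (N := 4 * z + / Rabs z) in *.
  assert (HK : 0 < m * (N / D)) by (apply Rmult_lt_0_compat; [lra| apply Rdiv_lt_0_compat; lra]).
  assert (Hs : 0 < sqrt (m * (N / D))) by (apply sqrt_lt_R0; lra).
  assert (E1 : sqrt (m * (N / D)) ^ 2 = m * (N / D)) by (apply pow2_sqrt; lra).
  split.
  - exists (sqrt (m * (N / D))). split; [exact Hs|]. split.
    + rewrite E1. field. split; lra.
    + apply sol; try assumption. fold D N. rewrite E1. field. lra.
  - exists (- sqrt (m * (N / D))). split; [lra|].
    assert (E2 : (- sqrt (m * (N / D))) ^ 2 = m * (N / D)) by (replace ((- sqrt (m * (N / D))) ^ 2) with (sqrt (m * (N / D)) ^ 2) by ring; exact E1).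
    split.
    + rewrite E2. field. split; lra.
    + apply sol; try assumption. fold D N. rewrite E2. field. lra.
Qed.
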